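(* Let $\Phi$ be an automorphism of $\mathcal C$. (i) $\Phi$ is potential-inner if and only if $\Phi(A_0)$ is isomorphic to $A_0$. (ii) Suppose $\Phi$ is potential-inner, witnessed by bijections $s_A:A\to\Phi(A)$ (one for each object $A$ of $\mathcal C$) with $\Phi(\mu)=s_B\circ\mu\circ s_A^{-1}$ for every morphism $\mu:A\to B$ of $\mathcal C$. Let $F$ be an object of $\mathcal C$ which is a free $\mathcal V$-algebra with basis $X$. Then $\Phi(F)$ is isomorphic to $F$. More precisely, the unique homomorphism $\sigma:F\to\Phi(F)$ with $\sigma(x)=s_F(x)$ for all $x\in X$ is an isomorphism; in particular $s_F(X)$ is a basis (free generating set) of $\Phi(F)$.
   Context: Let $\mathcal V$ be a variety of (one-sorted) universal algebras, and let $\Theta(\mathcal V)$ be the category of all algebras in $\mathcal V$ with all homomorphisms. Let $\mathcal C$ be a full subcategory of $\Theta(\mathcal V)$ which contains a free $\mathcal V$-algebra $A_0$ on a single free generator $x_0$. For an object $A$ of $\mathcal C$ and $a\in A$, let $\alpha^A_a:A_0\to A$ be the unique homomorphism with $\alpha^A_a(x_0)=a$. An automorphism $\Phi$ of $\mathcal C$ is called potential-inner if there exists a family of bijections of underlying sets $s_A:A\to\Phi(A)$, one for each object $A$ of $\mathcal C$, such that $\Phi(\mu)=s_B\circ\mu\circ s_A^{-1}$ for every morphism $\mu:A\to B$ of $\mathcal C$. Equivalently, $\Phi$ is the restriction of an inner automorphism of some category that has the same objects as $\mathcal C$, whose morphisms are maps between underlying sets, and which contains $\mathcal C$. *)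

(* Defs.v *)
From mathcomp Require Import all_boot.
Set Implicit Arguments. Unset Strict Implicit. Unset Printing Implicit Defensive.

Section UA.
Variable Op : Type.
Variable arity : Op -> nat.

Record algebra := Algebra {
  carrier :> Type;
  op : forall o : Op, ('I_(arity o) -> carrier) -> carrier }.

Inductive term : Type :=
  | Var : nat -> term
  | App : forall o : Op, ('I_(arity o) -> term) -> term.

Fixpoint eval (A : algebra) (v : nat -> A) (t : term) : A :=
  match t with
  | Var n => v n
  | App o ts => op (fun i => eval v (ts i))
  end.

Definition in_variety (E : term -> term -> Prop) (A : algebra) : Prop :=
  forall s t, E s t -> forall v : nat -> A, eval v s = eval v t.

Definition is_hom (A B : algebra) (f : A -> B) : Prop :=
  forall (o : Op) (xs : 'I_(arity o) -> A), f (op xs) = op (fun i => f (xs i)).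

Definition is_iso (A B : algebra) (f : A -> B) : Prop :=
  is_hom f /\ exists g : B -> A, is_hom g /\ cancel f g /\ cancel g f.

Definition isomorphic (A B : algebra) : Prop := exists f : A -> B, is_iso f.

Definition free_on (E : term -> term -> Prop) (F : algebra) (X : F -> Prop) : Prop :=
  in_variety E F /\
  forall B : algebra, in_variety E B ->
  forall f : forall x : F, X x -> B,
    (exists h : F -> B, is_hom h /\ forall x (Hx : X x), h x = f x Hx) /\
    (forall h1 h2 : F -> B, is_hom h1 -> is_hom h2 ->
       (forall x, X x -> h1 x = h2 x) -> forall y, h1 y = h2 y).

(* Objects of a full subcategory C of Theta(V), given by a class Cobj of algebras;
   morphisms A -> B are all homomorphisms (compared extensionally). *)
Definition ob (Cobj : algebra -> Prop) := {A : algebra | Cobj A}.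

Record automorphism (Cobj : algebra -> Prop) (PhiO : ob Cobj -> ob Cobj)
    (PhiM : forall A B : ob Cobj,
        (sval A -> sval B) -> (sval (PhiO A) -> sval (PhiO B))) : Prop := {
  aut_hom : forall (A B : ob Cobj) (f : sval A -> sval B), is_hom f -> is_hom (PhiM A B f);
  aut_id : forall (A : ob Cobj) (x : sval (PhiO A)), PhiM A A id x = x;
  aut_comp : forall (A B C : ob Cobj) (f : sval A -> sval B) (g : sval B -> sval C),
      is_hom f -> is_hom g ->
      forall x, PhiM A C (g \o f) x = PhiM B C g (PhiM A B f x);
  aut_ob_bij : bijective PhiO;
  aut_faithful : forall (A B : ob Cobj) (f g : sval A -> sval B), is_hom f -> is_hom g ->
      (forall x, PhiM A B f x = PhiM A B g x) -> forall x, f x = g x;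
  aut_full : forall (A B : ob Cobj) (h : sval (PhiO A) -> sval (PhiO B)), is_hom h ->
      exists f : sval A -> sval B, is_hom f /\ forall x, PhiM A B f x = h x }.

Definition potential_inner_witness (Cobj : algebra -> Prop) (PhiO : ob Cobj -> ob Cobj)
    (PhiM : forall A B : ob Cobj,
        (sval A -> sval B) -> (sval (PhiO A) -> sval (PhiO B)))
    (s : forall A : ob Cobj, sval A -> sval (PhiO A))
    (sinv : forall A : ob Cobj, sval (PhiO A) -> sval A) : Prop :=
  (forall A : ob Cobj, cancel (s A) (sinv A) /\ cancel (sinv A) (s A)) /\
  (forall (A B : ob Cobj) (mu : sval A -> sval B), is_hom mu ->
     forall y, PhiM A B mu y = s B (mu (sinv A y))).

Definition potential_inner (Cobj : algebra -> Prop) (PhiO : ob Cobj -> ob Cobj)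
    (PhiM : forall A B : ob Cobj,
        (sval A -> sval B) -> (sval (PhiO A) -> sval (PhiO B))) : Prop :=
  exists s sinv, @potential_inner_witness Cobj PhiO PhiM s sinv.

End UA.
Arguments free_on {Op arity} E F X.
Arguments isomorphic {Op arity} A B.
Arguments in_variety {Op arity} E A.

(* Main.v *)
Require Import Defs.
From mathcomp Require Import all_boot.
From Stdlib Require Import ProofIrrelevance FunctionalExtensionality IndefiniteDescription.
Set Implicit Arguments. Unset Strict Implicit.

Lemma hom_comp Op (arity : Op -> nat) (A B C : algebra arity) (f : A -> B) (g : B -> C) :
  is_hom f -> is_hom g -> is_hom (g \o f).
Proof. by move=> Hf Hg o xs; rewrite /= Hf Hg. Qed.

Lemma free_iso Op (arity : Op -> nat) E (F G : algebra arity) (X : F -> Prop) (Y : G -> Prop)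
  (sigma : F -> G) (tau : G -> F) :
  is_hom sigma -> is_hom tau -> cancel sigma tau -> cancel tau sigma ->
  in_variety E G -> free_on E F X ->
  (forall y, Y y <-> exists2 x, X x & y = sigma x) ->
  free_on E G Y.
Proof.
move=> Hs Ht K1 K2 HG [HF Hfree] HY; split=> // B HB f.
have HYs : forall x, X x -> Y (sigma x) by move=> x Hx; apply/HY; exists x.
have [[h [Hh Hhx]] _] := Hfree B HB (fun x Hx => f (sigma x) (HYs x Hx)).
split.
  exists (h \o tau); split; first exact: hom_comp.
  move=> y Hy; have [x Hx Hxy] := (proj1 (HY y) Hy).
  subst y => /=; rewrite K1 Hhx; congr f; exact: proof_irrelevance.
move=> h1 h2 H1 H2 Heq y.
have := (proj2 (Hfree B HB (fun x _ => h1 (sigma x)))) (h1 \o sigma) (h2 \o sigma)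
  (hom_comp Hs H1) (hom_comp Hs H2).
move=> /(_ (fun x Hx => Heq _ (HYs x Hx)) (tau y)) /=.
by rewrite K2.
Qed.

Section Main.
Variables (Op : Type) (arity : Op -> nat) (E : term arity -> term arity -> Prop)
  (Cobj : algebra arity -> Prop)
  (HC : forall A, Cobj A -> in_variety E A)
  (PhiO : ob Cobj -> ob Cobj)
  (PhiM : forall A B : ob Cobj,
      (sval A -> sval B) -> (sval (PhiO A) -> sval (PhiO B)))
  (HPhi : automorphism PhiM).

Lemma HCo (A : ob Cobj) : in_variety E (sval A).
Proof. exact: HC (proj2_sig A). Qed.

Lemma partii (s : forall A : ob Cobj, sval A -> sval (PhiO A))
          (sinv : forall A : ob Cobj, sval (PhiO A) -> sval A) :
     potential_inner_witness PhiM s sinv ->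
     forall (F : ob Cobj) (X : sval F -> Prop), free_on E (sval F) X ->
       isomorphic (sval (PhiO F)) (sval F) /\
       (exists sigma : sval F -> sval (PhiO F),
          is_hom sigma /\ forall x, X x -> sigma x = s F x) /\
       (forall sigma : sval F -> sval (PhiO F),
          is_hom sigma -> (forall x, X x -> sigma x = s F x) -> is_iso sigma) /\
       free_on E (sval (PhiO F)) (fun y => exists2 x, X x & y = s F x).
Proof.
move=> [Hsc Hnat] F X HF.
have [g _ Kg] := aut_ob_bij HPhi.
have [A eA] : exists A, PhiO A = F by exists (g F); exact: Kg.
subst F.
have [[h [Hh Hhx]] _] := (proj2 HF) (sval A) (@HCo A) (fun x _ => sinv A x).
set tau := @PhiM (PhiO A) A h.
have Htau : is_hom tau by apply: (aut_hom HPhi).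
have taus : forall x, X x -> tau (s _ x) = x.
  move=> x Hx; rewrite /tau Hnat // (proj1 (Hsc _)) (Hhx x Hx).
  exact: (proj2 (Hsc A)).
have Hiso : forall sigma : sval (PhiO A) -> sval (PhiO (PhiO A)),
    is_hom sigma -> (forall x, X x -> sigma x = s _ x) ->
    cancel sigma tau /\ cancel tau sigma.
  move=> sigma Hs Hsx; split.
    move=> y; have := (proj2 ((proj2 HF) _ (@HCo (PhiO A)) (fun x _ => x)))
      (tau \o sigma) id (hom_comp Hs Htau) (fun o xs => erefl) _ y; apply.
    by move=> x Hx /=; rewrite Hsx // taus.
  have [k [Hk Hkx]] := aut_full HPhi (hom_comp Htau Hs).
  have kid : forall x, k x = x.
    move=> x; have := (proj2 ((proj2 HF) _ (@HCo (PhiO A)) (fun x _ => x)))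
      k id Hk (fun o xs => erefl) _ x; apply.
    move=> z Hz; apply: (can_inj (proj1 (Hsc _))).
    rewrite -{1}[z](proj1 (Hsc (PhiO A))) -Hnat // Hkx /= taus //.
    by rewrite Hsx.
  move=> y; rewrite -[sigma (tau y)]/((sigma \o tau) y) -Hkx Hnat // kid.
  exact: (proj2 (Hsc _)).
have [[sigma [Hs Hsx]] _] := (proj2 HF) _ (@HCo (PhiO (PhiO A))) (fun x _ => s _ x).
have [K1 K2] := Hiso sigma Hs Hsx.
split; first by exists tau; split=> //; exists sigma.
split; first by exists sigma.
split.
  move=> sg Hsg Hsgx; have [L1 L2] := Hiso sg Hsg Hsgx.
  by split=> //; exists tau.
apply: (free_iso Hs Htau K1 K2 (@HCo _) HF).
move=> y; split; case=> x Hx ->; exists x => //; by rewrite Hsx.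
Qed.

End Main.

Theorem mainTheorem1
  (Op : Type) (arity : Op -> nat) (E : term arity -> term arity -> Prop)
  (Cobj : algebra arity -> Prop)
  (HC : forall A, Cobj A -> in_variety E A)
  (A0 : ob Cobj) (x0 : sval A0) (HA0 : free_on E (sval A0) (fun x => x = x0))
  (PhiO : ob Cobj -> ob Cobj)
  (PhiM : forall A B : ob Cobj,
      (sval A -> sval B) -> (sval (PhiO A) -> sval (PhiO B)))
  (HPhi : automorphism PhiM) :
  (potential_inner PhiM <-> isomorphic (sval (PhiO A0)) (sval A0)) /\
  (forall (s : forall A : ob Cobj, sval A -> sval (PhiO A))
          (sinv : forall A : ob Cobj, sval (PhiO A) -> sval A),
     potential_inner_witness PhiM s sinv ->
     forall (F : ob Cobj) (X : sval F -> Prop), free_on E (sval F) X ->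
       isomorphic (sval (PhiO F)) (sval F) /\
       (exists sigma : sval F -> sval (PhiO F),
          is_hom sigma /\ forall x, X x -> sigma x = s F x) /\
       (forall sigma : sval F -> sval (PhiO F),
          is_hom sigma -> (forall x, X x -> sigma x = s F x) -> is_iso sigma) /\
       free_on E (sval (PhiO F)) (fun y => exists2 x, X x & y = s F x)).
Proof.
split; last exact: partii.
split.
  by case=> s [sinv W]; case: (partii HC HPhi W HA0).
case=> phi [Hphi [psi [Hpsi [K1 K2]]]].
pose y0 := psi x0.
have HCo : forall A : ob Cobj, in_variety E (sval A) by move=> A; exact: HC (proj2_sig A).
have HY : free_on E (sval (PhiO A0)) (fun y => y = y0).
  apply: (free_iso Hpsi Hphi K2 K1 (HCo _) HA0).
  by move=> y; split; [move=> ->; exists x0 | case=> x -> ->].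
have alpha : forall (A : ob Cobj) (a : sval A),
    {f : sval A0 -> sval A | is_hom f /\ f x0 = a}.
  move=> A a; apply: constructive_indefinite_description.
  have [[h [Hh Hhx]] _] := (proj2 HA0) (sval A) (HCo A) (fun x _ => a).
  by exists h; split=> //; apply: Hhx.
have beta : forall (A : ob Cobj) (b : sval (PhiO A)),
    {f : sval A0 -> sval A | is_hom f /\ @PhiM A0 A f y0 = b}.
  move=> A b; apply: constructive_indefinite_description.
  have [[h [Hh Hhx]] _] := (proj2 HY) (sval (PhiO A)) (HCo _) (fun x _ => b).
  have [f [Hf Hfx]] := aut_full HPhi Hh.
  by exists f; split=> //; rewrite Hfx; apply: Hhx.
have uA0 : forall (A : ob Cobj) (f g : sval A0 -> sval A), is_hom f -> is_hom g ->
    f x0 = g x0 -> f = g.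
  move=> A f g Hf Hg H; apply: functional_extensionality => x.
  apply: ((proj2 ((proj2 HA0) (sval A) (HCo A) (fun x _ => f x0))) f g Hf Hg).
  by move=> z ->.
have uY : forall (A : ob Cobj) (f g : sval (PhiO A0) -> sval (PhiO A)), is_hom f -> is_hom g ->
    f y0 = g y0 -> forall y, f y = g y.
  move=> A f g Hf Hg H y.
  apply: ((proj2 ((proj2 HY) (sval (PhiO A)) (HCo _) (fun x _ => f y0))) f g Hf Hg).
  by move=> z ->.
pose s := fun (A : ob Cobj) (a : sval A) => @PhiM A0 A (sval (alpha A a)) y0.
pose sinv := fun (A : ob Cobj) (b : sval (PhiO A)) => sval (beta A b) x0.
have Hcan : forall A : ob Cobj, cancel (s A) (sinv A) /\ cancel (sinv A) (s A).
  move=> A; split.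
    move=> a; rewrite /sinv.
    case: (beta A (s A a)) => f [Hf Hfy] /=.
    rewrite /s in Hfy.
    case: (alpha A a) => al [Hal Halx] in Hfy *.
    rewrite -Halx; apply: (aut_faithful HPhi Hf Hal).
    apply: uY; try exact: (aut_hom HPhi).
    exact: Hfy.
  move=> b; rewrite /s /sinv.
  case: (beta A b) => f [Hf Hfy] /=.
  case: (alpha A (f x0)) => al [Hal Halx] /=.
  by rewrite (uA0 _ _ _ Hal Hf Halx).
exists s, sinv; split=> // A B mu Hmu y.
rewrite -{1}[y](proj2 (Hcan A)).
move: (sinv A y) => a; rewrite /s.
case: (alpha A a) => al [Hal Halx] /=.
case: (alpha B (mu a)) => al' [Hal' Halx'] /=.
rewrite -(aut_comp HPhi Hal Hmu); congr (@PhiM _ _ _ y0).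
by apply: uA0 => //; [exact: hom_comp | rewrite /= Halx].
Qed.
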